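(* Let $(x_k)_{k\ge0}$ be indeterminates, define $a_n=x_n$ if $n=2^k-1$ for some integer $k\ge0$ and $a_n=0$ otherwise, let $D(n)=\det\left(a_{i+j+1}\right)_{i,j=0}^{n-1}$ with $D(0)=1$, and let $T_n=\frac{D(n)D(n+2)}{D(n+1)^2}$ (in the field of rational functions). Then for all $n\ge0$, $$T_{2n+1}=-T_{2n},\qquad T_{4n}=(-1)^n\frac{x_3}{x_1},$$ and for all $k\ge2$ and $n\ge0$, $$T_{2^{k+1}n+2^k-1}=(-1)^n\frac{x_1x_{2^{k+1}-1}}{x_{2^k-1}^2}.$$ *)

(* Defs.v *)
From HB Require Import structures.
From mathcomp Require Import all_boot all_order all_algebra.
From mathcomp Require Import mpoly.
Set Implicit Arguments. Unset Strict Implicit. Unset Printing Implicit Defensive.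
Import Order.TTheory GRing.Theory Num.Theory.
Local Open Scope ring_scope.

Definition RatF (N : nat) := {fraction {mpoly int[N]}}.

(* The indeterminate x_k, viewed in RatF N (only meaningful for k < N;
   it is 0 otherwise, and the theorem only uses k < N). *)
Definition xvar (N k : nat) : RatF N :=
  match @insub nat (fun i => i < N)%N 'I_N k with
  | Some i => tofrac ('X_i : {mpoly int[N]})
  | None => 0
  end.

Definition is_pow2m1 (n : nat) : bool := [exists k : 'I_n.+2, n.+1 == 2 ^ k]%N.

Definition aseq (N n : nat) : RatF N := if is_pow2m1 n then xvar N n else 0.

Definition Dh (N n : nat) : RatF N := \det (\matrix_(i < n, j < n) aseq N (i + j + 1)%N).

Definition Th (N n : nat) : RatF N := Dh N n * Dh N n.+2 / (Dh N n.+1) ^+ 2.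

(* Main.v *)
Require Import Defs.
From HB Require Import structures.
From mathcomp Require Import all_boot all_order all_algebra perm.
From mathcomp Require Import zify ring.
From mathcomp Require Import mpoly.
Set Implicit Arguments. Unset Strict Implicit. Unset Printing Implicit Defensive.
Import Order.TTheory GRing.Theory Num.Theory.
Local Open Scope ring_scope.

Lemma P_spec n : reflect (exists k, n.+1 = 2 ^ k)%N (is_pow2m1 n).
Proof.
apply: (iffP existsP) => [[k /eqP e]|[k e]]; first by exists k.
have lt : (k < n.+2)%N by rewrite e ltnS ltnW // ltn_expl.
by exists (Ordinal lt); rewrite /= e.
Qed.

Lemma P0 : is_pow2m1 0.
Proof. by apply/P_spec; exists 0%N. Qed.

Lemma P_even k : is_pow2m1 (2 * k + 2) = false.
Proof.
apply/P_spec => -[k' e]; case: k' e => [|j] e; first by rewrite expn0 in e; lia.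
have := congr1 odd e; rewrite expnS oddM /= addn2 /=.
by rewrite mul2n odd_double.
Qed.

Lemma P_odd k : is_pow2m1 (2 * k + 1) = is_pow2m1 k.
Proof.
apply/P_spec/P_spec => -[j e].
  case: j e => [|j] e; first by rewrite expn0 in e; lia.
  by exists j; rewrite expnS in e; lia.
by exists j.+1; rewrite expnS; lia.
Qed.
Lemma det_reindex (R : comNzRingType) n (s : 'S_n) (A : 'M[R]_n) :
  \det (\matrix_(i, j) A (s i) (s j)) = \det A.
Proof.
have -> : \matrix_(i, j) A (s i) (s j) = row_perm s (col_perm s A).
  by apply/matrixP => i j; rewrite !mxE.
rewrite row_permE col_permE !det_mulmx !det_perm odd_permV mulrCA.
by rewrite -signr_addb addbb mulr1.
Qed.

Lemma det_swap (R : comNzRingType) m :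
  \det (block_mx 0 1%:M 1%:M 0 : 'M[R]_(m + m)) = (-1) ^+ m.
Proof.
have -> : (block_mx 0 1%:M 1%:M 0 : 'M[R]_(m + m)) =
  block_mx 1%:M 1%:M 0 1%:M *m block_mx 1%:M 0 (- 1%:M) 1%:M *m
  block_mx 1%:M 1%:M 0 1%:M *m block_mx (- 1%:M) 0 0 1%:M.
  rewrite !mulmx_block.
  rewrite !(mulmx1, mul1mx, mul0mx, mulmx0, addr0, add0r, mulmxN, mulNmx).
  by rewrite subrr oppr0 add0r opprK addNr.
rewrite !det_mulmx !det_ublock det_lblock -scaleN1r detZ !det1 !mulr1 !mul1r.
by [].
Qed.

Definition eo (m1 m2 : nat) (i : 'I_(m1 + m2)) : nat :=
  match split i with inl a => (2 * a)%N | inr b => (2 * b + 1)%N end.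

Lemma eo_lt m1 m2 (h : (m2 <= m1 <= m2.+1)%N) (i : 'I_(m1 + m2)) : (eo i < m1 + m2)%N.
Proof.
rewrite /eo; case: splitP => [a _|b _].
  by have := ltn_ord a; move: h => /andP[]; lia.
by have := ltn_ord b; move: h => /andP[]; lia.
Qed.

Definition eoO m1 m2 h (i : 'I_(m1 + m2)) : 'I_(m1 + m2) := Ordinal (@eo_lt m1 m2 h i).

Lemma eoO_inj m1 m2 h : injective (@eoO m1 m2 h).
Proof.
move=> i j /(congr1 val) /=; rewrite /eo.
rewrite -{2}(splitK i) -{2}(splitK j).
case: (split i) => a; case: (split j) => b /= E.
- by have -> : a = b by apply: val_inj => /=; lia.
- lia.
- lia.
- by have -> : a = b by apply: val_inj => /=; lia.
Qed.

Lemma det_eo (R : comNzRingType) m1 m2 (h : (m2 <= m1 <= m2.+1)%N)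
  (A B : 'M[R]_(m1 + m2)) :
  (forall i j, B i j = A (eoO h i) (eoO h j)) -> \det B = \det A.
Proof.
move=> HB; rewrite -(det_reindex (perm (@eoO_inj m1 m2 h)) A).
by congr (\det _); apply/matrixP => i j; rewrite !mxE !permE HB.
Qed.

Lemma eoO_l m1 m2 h (a : 'I_m1) : (@eoO m1 m2 h (lshift m2 a) : nat) = (2 * a)%N.
Proof. by rewrite /= /eo (unsplitK (inl _ a)). Qed.
Lemma eoO_r m1 m2 h (b : 'I_m2) : (@eoO m1 m2 h (rshift m1 b) : nat) = (2 * b + 1)%N.
Proof. by rewrite /= /eo (unsplitK (inr _ b)). Qed.

Definition H (R : comNzRingType) (s : nat -> R) (n : nat) : R :=
  \det (\matrix_(i < n, j < n) s (i + j)%N).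

Lemma eq_H (R : comNzRingType) (s s' : nat -> R) n : s =1 s' -> H s n = H s' n.
Proof. by move=> e; rewrite /H; congr (\det _); apply/matrixP => i j; rewrite !mxE. Qed.

Lemma block_eq (R : Type) m1 m2 (B A : 'M[R]_(m1 + m2)) :
  (forall a b, B (lshift m2 a) (lshift m2 b) = A (lshift m2 a) (lshift m2 b)) ->
  (forall a b, B (lshift m2 a) (rshift m1 b) = A (lshift m2 a) (rshift m1 b)) ->
  (forall a b, B (rshift m1 a) (lshift m2 b) = A (rshift m1 a) (lshift m2 b)) ->
  (forall a b, B (rshift m1 a) (rshift m1 b) = A (rshift m1 a) (rshift m1 b)) ->
  B = A.
Proof.
move=> h1 h2 h3 h4; apply/matrixP => i j.
rewrite -(splitK i) -(splitK j).
by case: (split i) => a; case: (split j) => b /=.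
Qed.

Lemma det_eo' (R : comNzRingType) m1 m2 (h : (m2 <= m1 <= m2.+1)%N)
  (A B : 'M[R]_(m1 + m2)) :
  B = \matrix_(i, j) A (eoO h i) (eoO h j) -> \det B = \det A.
Proof.
move=> ->; rewrite -(det_reindex (perm (@eoO_inj m1 m2 h)) A).
by congr (\det _); apply/matrixP => i j; rewrite !mxE !permE.
Qed.

Lemma H_even_split (R : comNzRingType) (g : nat -> R) m1 m2
  (h : (m2 <= m1 <= m2.+1)%N) : (forall k, g (2 * k + 1)%N = 0) ->
  H g (m1 + m2) = H (fun k => g (2 * k)%N) m1 * H (fun k => g (2 * k + 2)%N) m2.
Proof.
move=> hg; rewrite /H -(det_ublock _ 0); symmetry; apply: (@det_eo' _ m1 m2 h).
apply: block_eq => a b;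
  rewrite ?block_mxEul ?block_mxEur ?block_mxEdl ?block_mxEdr !mxE ?eoO_l ?eoO_r.
- by f_equal; lia.
- by rewrite (_ : (2 * a + (2 * b + 1) = 2 * (a + b) + 1)%N) ?hg //; lia.
- by rewrite (_ : (2 * a + 1 + 2 * b = 2 * (a + b) + 1)%N) ?hg //; lia.
- by f_equal; lia.
Qed.

Lemma H_A_even (R : comNzRingType) (s : nat -> R) m :
  (forall k, s (2 * k + 2)%N = 0) ->
  H s (m + m) = (-1) ^+ m * H (fun k => s (2 * k + 1)%N) m ^+ 2.
Proof.
move=> hs; have h : (m <= m <= m.+1)%N by rewrite leqnn leqnSn.
pose E := \matrix_(a < m, b < m) s (2 * (a + b))%N.
pose M := \matrix_(a < m, b < m) s (2 * (a + b) + 1)%N.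
have -> : H (fun k => s (2 * k + 1)%N) m = \det M by [].
rewrite /H -(@det_eo' _ m m h _ (block_mx E M M 0)); last first.
  apply: block_eq => a b;
    rewrite ?block_mxEul ?block_mxEur ?block_mxEdl ?block_mxEdr !mxE ?eoO_l ?eoO_r.
  - by f_equal; lia.
  - by f_equal; lia.
  - by f_equal; lia.
  - by rewrite (_ : (2 * a + 1 + (2 * b + 1) = 2 * (a + b) + 2)%N) ?hs //; lia.
have -> : block_mx E M M 0 = block_mx M E 0 M *m block_mx 0 1%:M 1%:M 0.
  rewrite mulmx_block.
  by rewrite !(mulmx1, mul1mx, mul0mx, mulmx0, addr0, add0r).
by rewrite det_mulmx det_ublock det_swap mulrC expr2.
Qed.

Lemma H_odd_zero (R : fieldType) (s : nat -> R) m :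
  (forall k, s (2 * k)%N = 0) -> H s (m.+1 + m) = 0.
Proof.
move=> hs; have h : (m <= m.+1 <= m.+1)%N by rewrite leqnn leqnSn.
pose M := \matrix_(a < m.+1, b < m) s (2 * a + (2 * b + 1))%N.
pose N := \matrix_(a < m, b < m.+1) s (2 * a + 1 + 2 * b)%N.
pose X := (block_mx M 0 0 1%:M : 'M[R]_(m.+1 + m, m + m)).
pose Y := (block_mx 0 1%:M N 0 : 'M[R]_(m + m, m.+1 + m)).
rewrite /H -(@det_eo' _ m.+1 m h _ (X *m Y)); last first.
  rewrite /X /Y mulmx_block !(mulmx1, mul1mx, mul0mx, mulmx0, addr0, add0r).
  apply: block_eq => a b;
    rewrite ?block_mxEul ?block_mxEur ?block_mxEdl ?block_mxEdr !mxE ?eoO_l ?eoO_r //.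
  - by rewrite (_ : (2 * a + 2 * b = 2 * (a + b))%N) ?hs //; lia.
  - by rewrite (_ : (2 * a + 1 + (2 * b + 1) = 2 * (a + b + 1))%N) ?hs //; lia.
apply/eqP; apply: contraT => nz.
have U : (X *m Y) \in unitmx by rewrite unitmxE unitfE.
have := mxrank_unit U; have := mxrankM_maxl X Y; have := rank_leq_col X.
lia.
Qed.

Lemma H_row0 (R : comNzRingType) (s : nat -> R) p :
  H s p.+1 = H (fun k => if k == 0%N then 0 else s k) p.+1 + s 0%N * H (fun k => s k.+2) p.
Proof.
rewrite /H !(expand_det_row _ ord0) !big_ord_recl.
set A := \matrix_(i, j) _; set B := \matrix_(i, j) _.
have hc : forall j, cofactor A ord0 j = cofactor B ord0 j.
  move=> j; rewrite /cofactor; congr (_ * \det _); apply/matrixP => a b.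
  by rewrite !mxE lift0 /= addSn.
have -> : \sum_(i < p) A ord0 (lift ord0 i) * cofactor A ord0 (lift ord0 i) =
    \sum_(i < p) B ord0 (lift ord0 i) * cofactor B ord0 (lift ord0 i).
  by apply: eq_bigr => i _; rewrite hc !mxE lift0 /= addnS.
rewrite hc [B ord0 ord0]mxE [A ord0 ord0]mxE /= mul0r add0r addrC; congr (_ + _).
rewrite add0n; congr (_ * _).
rewrite /cofactor /= expr0 mul1r; congr (determinant _).
by apply/matrixP => a b; rewrite !mxE !lift0 addSn addnS.
Qed.

Definition seqA (R : fieldType) (v : nat -> R) m := if is_pow2m1 m then v m else 0.
Definition seqB (R : fieldType) (v : nat -> R) m := if is_pow2m1 m.+1 then v m else 0.
Definition HA (R : fieldType) (v : nat -> R) n := H (seqA v) n.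
Definition HB (R : fieldType) (v : nat -> R) n := H (seqB v) n.

Lemma eq_HA (R : fieldType) (v v' : nat -> R) n : v =1 v' -> HA v n = HA v' n.
Proof. by move=> e; apply: eq_H => k; rewrite /seqA e. Qed.
Lemma eq_HB (R : fieldType) (v v' : nat -> R) n : v =1 v' -> HB v n = HB v' n.
Proof. by move=> e; apply: eq_H => k; rewrite /seqB e. Qed.

Lemma HA0 (R : fieldType) (v : nat -> R) : HA v 0 = 1.
Proof. by rewrite /HA /H det_mx00. Qed.
Lemma HB0 (R : fieldType) (v : nat -> R) : HB v 0 = 1.
Proof. by rewrite /HB /H det_mx00. Qed.

Lemma HB_even (R : fieldType) (v w1 w2 : nat -> R) n :
  (forall m, w1 m = v (2 * m)%N) -> (forall m, w2 m = v (2 * m + 2)%N) ->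
  HB v (n + n) = HA w1 n * HB w2 n.
Proof.
move=> h1 h2; rewrite /HB (@H_even_split _ _ n n); last first.
- by move=> k; rewrite /seqB addn1 -addn2 P_even.
- by rewrite leqnn leqnSn.
congr (_ * _); apply: eq_H => k; rewrite /seqA /seqB.
  by rewrite -addn1 P_odd h1.
by rewrite (_ : (2 * k + 2).+1 = 2 * k.+1 + 1)%N ?P_odd ?h2 //; lia.
Qed.

Lemma HB_odd (R : fieldType) (v w1 w2 : nat -> R) n :
  (forall m, w1 m = v (2 * m)%N) -> (forall m, w2 m = v (2 * m + 2)%N) ->
  HB v (n.+1 + n) = HA w1 n.+1 * HB w2 n.
Proof.
move=> h1 h2; rewrite /HB (@H_even_split _ _ n.+1 n); last first.
- by move=> k; rewrite /seqB addn1 -addn2 P_even.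
- by rewrite leqnSn leqnn.
congr (_ * _); apply: eq_H => k; rewrite /seqA /seqB.
  by rewrite -addn1 P_odd h1.
by rewrite (_ : (2 * k + 2).+1 = 2 * k.+1 + 1)%N ?P_odd ?h2 //; lia.
Qed.

Lemma HA_even (R : fieldType) (v w : nat -> R) n :
  (forall m, w m = v (2 * m + 1)%N) ->
  HA v (n + n) = (-1) ^+ n * HA w n ^+ 2.
Proof.
move=> h; rewrite /HA H_A_even; last by move=> k; rewrite /seqA P_even.
by congr (_ * _ ^+ 2); apply: eq_H => k; rewrite /seqA P_odd h.
Qed.

Lemma HA_odd (R : fieldType) (v w : nat -> R) n :
  (forall m, w m = v (2 * m + 3)%N) ->
  HA v (n.+1 + n) = v 0%N * (-1) ^+ n * HB w n ^+ 2.
Proof.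
move=> h; rewrite /HA addSn H_row0 -addSn H_odd_zero ?add0r; last first.
  move=> [|k] //; rewrite /seqA (_ : (2 * k.+1 = 2 * k + 2)%N) ?P_even.
    by case: ifP.
  by lia.
rewrite H_A_even; last first.
  by move=> k; rewrite /seqA (_ : ((2 * k + 2).+2 = 2 * k.+1 + 2)%N) ?P_even //; lia.
rewrite /seqA P0 mulrA; congr (_ * _ ^+ 2); apply: eq_H => k.
rewrite /seqB (_ : ((2 * k + 1).+2 = 2 * k.+1 + 1)%N) ?P_odd ?h //; last by lia.
by congr (if _ then v _ else _); lia.
Qed.

Lemma nat_split n : exists k, n = (k + k)%N \/ n = (k.+1 + k)%N.
Proof.
exists n./2; have := odd_double_half n; rewrite -addnn.
by case: (odd n) => /= e; [right|left]; lia.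
Qed.

Lemma HAB_nz (R : fieldType) n : forall v : nat -> R, (forall m, v m != 0) ->
  HA v n != 0 /\ HB v n != 0.
Proof.
elim/ltn_ind: n => n IH.
have hA : forall u : nat -> R, (forall m, u m != 0) -> HA u n != 0.
  move=> u hu; have [k [e|e]] := nat_split n.
    case: k e => [|k] e; first by rewrite e HA0 oner_eq0.
    have lt : (k.+1 < n)%N by rewrite e; lia.
    have [h1 _] := IH k.+1 lt (fun m => u (2 * m + 1)%N) (fun m => hu _).
    rewrite e (@HA_even _ _ (fun m => u (2 * m + 1)%N)) //.
    by rewrite mulf_neq0 ?expf_neq0 ?oppr_eq0 ?oner_eq0.
  have lt : (k < n)%N by rewrite e; lia.
  have [_ h1] := IH k lt (fun m => u (2 * m + 3)%N) (fun m => hu _).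
  rewrite e (@HA_odd _ _ (fun m => u (2 * m + 3)%N)) //.
  by rewrite !mulf_neq0 ?expf_neq0 ?oppr_eq0 ?oner_eq0.
move=> v hv; split; first exact: hA.
have [k [e|e]] := nat_split n.
  case: k e => [|k] e; first by rewrite e HB0 oner_eq0.
  have lt : (k.+1 < n)%N by rewrite e; lia.
  have [h1 _] := IH k.+1 lt (fun m => v (2 * m)%N) (fun m => hv _).
  have [_ h2] := IH k.+1 lt (fun m => v (2 * m + 2)%N) (fun m => hv _).
  rewrite e (@HB_even _ _ (fun m => v (2 * m)%N) (fun m => v (2 * m + 2)%N)) //.
  by rewrite mulf_neq0.
have lt : (k < n)%N by rewrite e; lia.
have [_ h2] := IH k lt (fun m => v (2 * m + 2)%N) (fun m => hv _).
have h1 : HA (fun m => v (2 * m)%N) k.+1 != 0.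
  case: k e lt h2 => [|k] e lt h2.
    by have := hA (fun m => v (2 * m)%N); rewrite e; apply.
  have lt' : (k.+2 < n)%N by rewrite e; lia.
  by case: (IH k.+2 lt' (fun m => v (2 * m)%N) (fun m => hv _)).
rewrite e (@HB_odd _ _ (fun m => v (2 * m)%N) (fun m => v (2 * m + 2)%N)) //.
by rewrite mulf_neq0.
Qed.

Lemma HA_I (R : fieldType) (u : nat -> R) n :
  HA u n * HA u n.+1 = (-1) ^+ n * u 0%N * HB (fun m => u m.+1) n ^+ 2.
Proof.
have [k [e|e]] := nat_split n; rewrite e.
  rewrite (@HA_even _ _ (fun m => u (2 * m + 1)%N)) // -addSn.
  rewrite (@HA_odd _ _ (fun m => u (2 * m + 3)%N)) //.
  rewrite (@HB_even _ _ (fun m => u (2 * m + 1)%N) (fun m => u (2 * m + 3)%N));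
    try by move=> m; f_equal; lia.
  rewrite exprD -signr_odd.
  by case: (odd k); rewrite ?expr0 ?expr1; ring.
rewrite (@HA_odd _ _ (fun m => u (2 * m + 3)%N)) //.
rewrite (_ : (k.+1 + k).+1 = k.+1 + k.+1)%N; last by lia.
rewrite (@HA_even _ _ (fun m => u (2 * m + 1)%N)) //.
rewrite (@HB_odd _ _ (fun m => u (2 * m + 1)%N) (fun m => u (2 * m + 3)%N));
  try by move=> m; f_equal; lia.
rewrite !exprD !exprS -signr_odd.
by case: (odd k); rewrite ?expr0 ?expr1; ring.
Qed.

Definition rA (R : fieldType) (v : nat -> R) n := HA v n.+1 / HA v n.
Definition rB (R : fieldType) (v : nat -> R) n := HB v n.+1 / HB v n.

Lemma eq_rA (R : fieldType) (v v' : nat -> R) n : v =1 v' -> rA v n = rA v' n.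
Proof. by move=> e; rewrite /rA !(eq_HA _ e). Qed.
Lemma eq_rB (R : fieldType) (v v' : nat -> R) n : v =1 v' -> rB v n = rB v' n.
Proof. by move=> e; rewrite /rB !(eq_HB _ e). Qed.

Lemma RB_even (R : fieldType) (v w1 : nat -> R) n : (forall m, v m != 0) ->
  (forall m, w1 m = v (2 * m)%N) -> rB v (n + n) = rA w1 n.
Proof.
move=> hv h1; set w2 := fun m => v (2 * m + 2)%N.
have [_ nzB] := HAB_nz n (fun m => hv (2 * m + 2)%N : w2 m != 0).
have [nzA _] := HAB_nz n (fun m => eq_ind_r (fun x => x != 0) (hv _) (h1 m)).
rewrite /rB /rA -addSn (@HB_odd _ v w1 w2) // (@HB_even _ v w1 w2) //.
by field; rewrite nzA nzB.
Qed.

Lemma RB_odd (R : fieldType) (v w2 : nat -> R) n : (forall m, v m != 0) ->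
  (forall m, w2 m = v (2 * m + 2)%N) -> rB v (n.+1 + n) = rB w2 n.
Proof.
move=> hv h2; set w1 := fun m => v (2 * m)%N.
have [nzA _] := HAB_nz n.+1 (fun m => hv (2 * m)%N : w1 m != 0).
have [_ nzB] := HAB_nz n (fun m => eq_ind_r (fun x => x != 0) (hv _) (h2 m)).
rewrite /rB /rA (_ : (n.+1 + n).+1 = n.+1 + n.+1)%N; last by lia.
rewrite (@HB_odd _ v w1 w2) // (@HB_even _ v w1 w2) //.
by field; rewrite nzA nzB.
Qed.

Lemma RA_even (R : fieldType) (v w : nat -> R) n : (forall m, v m != 0) ->
  (forall m, w m = v (2 * m + 1)%N) ->
  rA v (n + n) = (-1) ^+ n * (v 0%N / v 1%N) * rA w n.
Proof.
move=> hv h; have hw : forall m, w m != 0 by move=> m; rewrite h.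
have [nzA _] := HAB_nz n hw; have [nzA' _] := HAB_nz n.+1 hw.
have [_ nzB] := HAB_nz n (fun m => hw m.+1).
have hI := HA_I w n.
rewrite /rA -addSn (@HA_odd _ v (fun m => w m.+1)); last by move=> m; rewrite h; f_equal; lia.
rewrite (@HA_even _ v w) //.
have w0 : w 0%N = v 1%N by rewrite h.
rewrite w0 in hI.
have hB : HB (fun m => w m.+1) n ^+ 2 = HA w n * HA w n.+1 / ((-1) ^+ n * v 1%N).
  rewrite hI; field; by rewrite signr_eq0 hv.
rewrite hB; rewrite -signr_odd; case: (odd n); rewrite ?expr0 ?expr1;
  field; by rewrite ?nzA ?nzA' ?hv ?oppr_eq0 ?oner_eq0.
Qed.

Lemma RA_odd (R : fieldType) (v w : nat -> R) n : (forall m, v m != 0) ->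
  (forall m, w m = v (2 * m + 1)%N) ->
  rA v (n.+1 + n) = (-1) ^+ n.+1 * (v 1%N / v 0%N) * rA w n.
Proof.
move=> hv h; have hw : forall m, w m != 0 by move=> m; rewrite h.
have [nzA _] := HAB_nz n hw; have [nzA' _] := HAB_nz n.+1 hw.
have [_ nzB] := HAB_nz n (fun m => hw m.+1).
have hI := HA_I w n.
rewrite /rA (_ : (n.+1 + n).+1 = n.+1 + n.+1)%N; last by lia.
rewrite (@HA_odd _ v (fun m => w m.+1)); last by move=> m; rewrite h; f_equal; lia.
rewrite (@HA_even _ v w) //.
have w0 : w 0%N = v 1%N by rewrite h.
rewrite w0 in hI.
have hB : HB (fun m => w m.+1) n ^+ 2 = HA w n * HA w n.+1 / ((-1) ^+ n * v 1%N).
  rewrite hI; field; by rewrite signr_eq0 hv.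
rewrite hB exprS; rewrite -signr_odd; case: (odd n); rewrite ?expr0 ?expr1;
  field; by rewrite ?nzA ?nzA' ?hv ?oppr_eq0 ?oner_eq0.
Qed.

Lemma rA_I (R : fieldType) (u : nat -> R) n : (forall m, u m != 0) ->
  rA u n * rA u n.+1 = - rB (fun m => u m.+1) n ^+ 2.
Proof.
move=> hu.
have [nzA0 _] := HAB_nz n hu; have [nzA1 _] := HAB_nz n.+1 hu.
have [_ nzB0] := HAB_nz n (fun m => hu m.+1).
have [_ nzB1] := HAB_nz n.+1 (fun m => hu m.+1).
have e : rA u n * rA u n.+1 = (HA u n.+1 * HA u n.+2) / (HA u n * HA u n.+1).
  by rewrite /rA; field; rewrite nzA0 nzA1.
rewrite e HA_I HA_I /rB exprS.
rewrite -signr_odd; case: (odd n); rewrite ?expr0 ?expr1;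
  field; by rewrite ?nzB0 ?nzB1 ?hu ?oppr_eq0 ?oner_eq0.
Qed.

Definition TB (R : fieldType) (v : nat -> R) n := HB v n * HB v n.+2 / HB v n.+1 ^+ 2.

Lemma rA_nz (R : fieldType) (v : nat -> R) n : (forall m, v m != 0) -> rA v n != 0.
Proof.
move=> hv; have [a _] := HAB_nz n hv; have [b _] := HAB_nz n.+1 hv.
by rewrite /rA mulf_neq0 ?invr_eq0.
Qed.
Lemma rB_nz (R : fieldType) (v : nat -> R) n : (forall m, v m != 0) -> rB v n != 0.
Proof.
move=> hv; have [_ a] := HAB_nz n hv; have [_ b] := HAB_nz n.+1 hv.
by rewrite /rB mulf_neq0 ?invr_eq0.
Qed.

Lemma TB_r (R : fieldType) (v : nat -> R) n : (forall m, v m != 0) ->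
  TB v n = rB v n.+1 / rB v n.
Proof.
move=> hv; have [_ a] := HAB_nz n hv; have [_ b] := HAB_nz n.+1 hv.
have [_ c] := HAB_nz n.+2 hv.
by rewrite /TB /rB; field; rewrite ?a ?b ?c.
Qed.

Lemma claim1 (R : fieldType) (v : nat -> R) n : (forall m, v m != 0) ->
  TB v (n + n).+1 = - TB v (n + n).
Proof.
move=> hv; set w1 := fun m => v (2 * m)%N; set w2 := fun m => v (2 * m + 2)%N.
have hw1 : forall m, w1 m != 0 by move=> m; apply: hv.
have hw2 : forall m, w2 m != 0 by move=> m; apply: hv.
rewrite !TB_r // (_ : (n + n).+2 = n.+1 + n.+1)%N; last by lia.
rewrite -addSn (@RB_even _ v w1) // (@RB_odd _ v w2) // (@RB_even _ v w1) //.
have hI := rA_I n hw1.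
rewrite (@eq_rB _ _ w2) in hI; last by move=> m; rewrite /w1 /w2; f_equal; lia.
have a := rA_nz n hw1; have b := rB_nz n hw2.
have -> : rA w1 n.+1 = - rB w2 n ^+ 2 / rA w1 n.
  by rewrite -hI; field; rewrite a.
by field; rewrite a b.
Qed.

Lemma claim2 (R : fieldType) (v : nat -> R) n : (forall m, v m != 0) ->
  TB v ((n + n) + (n + n)) = (-1) ^+ n * (v 2%N / v 0%N).
Proof.
move=> hv; set w1 := fun m => v (2 * m)%N; set w2 := fun m => v (2 * m + 2)%N.
set U := fun m => v (4 * m + 2)%N.
have hw1 : forall m, w1 m != 0 by move=> m; apply: hv.
have hU : forall m, U m != 0 by move=> m; apply: hv.
have hw2 : forall m, w2 m != 0 by move=> m; apply: hv.
rewrite TB_r // -addSn (@RB_odd _ v w2) // (@RB_even _ v w1) //.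
rewrite (@RB_even _ w2 U) //; last by move=> m; rewrite /U /w2; f_equal; lia.
rewrite (@RA_even _ w1 U) //; last by move=> m; rewrite /U /w1; f_equal; lia.
have a := rA_nz n hU.
rewrite /w1 /= muln0 muln1.
rewrite -signr_odd; case: (odd n); rewrite ?expr0 ?expr1;
  field; by rewrite ?a ?hv ?oppr_eq0 ?oner_eq0.
Qed.

Lemma IterB (R : fieldType) r : forall (w w' : nat -> R) m, (forall x, w x != 0) ->
  (forall x, w' x = w (2 ^ r * x + 2 ^ r.+1 - 2)%N) ->
  rB w (2 ^ r * m.+1).-1 = rB w' m.
Proof.
elim: r => [|r IH] w w' m hw h.
  rewrite expn0 mul1n /=; apply: eq_rB => x; rewrite h expn0 expn1 mul1n.
  by f_equal; lia.
have hp := expn_gt0 2 r; rewrite /= in hp.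
have hq : (0 < 2 ^ r * m.+1)%N by rewrite muln_gt0 hp.
rewrite (_ : (2 ^ r.+1 * m.+1).-1 = (2 ^ r * m.+1).-1.+1 + (2 ^ r * m.+1).-1)%N; last first.
  by rewrite expnS -mulnA; move: (2 ^ r * m.+1)%N hq => q hq; lia.
rewrite (@RB_odd _ w (fun x => w (2 * x + 2)%N)) //.
apply: IH => // x; rewrite h; f_equal.
rewrite !expnS; move: (2 ^ r)%N hp => p hp; nia.
Qed.

Lemma IterA (R : fieldType) r : forall (w w' : nat -> R) m, (forall x, w x != 0) ->
  (forall x, w' x = w (2 ^ r * x + 2 ^ r - 1)%N) ->
  rA w (2 ^ r * m.+1).-1 = (-1) ^+ (m.+1 * (2 ^ r).-1) * (w (2 ^ r - 1)%N / w 0%N) * rA w' m.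
Proof.
elim: r => [|r IH] w w' m hw h.
  rewrite expn0 mul1n /= muln0 expr0 mul1r subnn divff // mul1r.
  by apply: eq_rA => x; rewrite h expn0 mul1n; f_equal; lia.
have hp := expn_gt0 2 r; rewrite /= in hp.
have hq : (0 < 2 ^ r * m.+1)%N by rewrite muln_gt0 hp.
rewrite (_ : (2 ^ r.+1 * m.+1).-1 = (2 ^ r * m.+1).-1.+1 + (2 ^ r * m.+1).-1)%N; last first.
  by rewrite expnS -mulnA; move: (2 ^ r * m.+1)%N hq => q hq; lia.
set u := fun x => w (2 * x + 1)%N.
have hu : forall x, u x != 0 by move=> x; apply: hw.
rewrite (@RA_odd _ w u) //.
rewrite (IH u w') //; last first.
  move=> x; rewrite h /u; f_equal.
  rewrite !expnS; move: (2 ^ r)%N hp => p hp; nia.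
rewrite /u (_ : (2 * (2 ^ r - 1) + 1 = 2 ^ r.+1 - 1)%N); last first.
  by rewrite !expnS; move: (2 ^ r)%N hp => p hp; nia.
rewrite muln0 add0n.
have e : (-1) ^+ (2 ^ r * m.+1).-1.+1 * (-1) ^+ (m.+1 * (2 ^ r).-1) =
         (-1) ^+ (m.+1 * (2 ^ r.+1).-1) :> R.
  rewrite -exprD; congr (_ ^+ _).
  rewrite !expnS; move: (2 ^ r)%N hp hq => p hp hq; nia.
rewrite -e; field.
by rewrite !hw.
Qed.

Lemma claim3 (R : fieldType) (v : nat -> R) r n : (forall m, v m != 0) ->
  TB v ((2 ^ r.+1 * (n + n).+1).-1 + (2 ^ r.+1 * (n + n).+1).-1).+1 =
  (-1) ^+ n * (v 0%N * v (2 ^ r.+3 - 2)%N / v (2 ^ r.+2 - 2)%N ^+ 2).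
Proof.
move=> hv; set j := (2 ^ r.+1 * (n + n).+1).-1.
have hp := expn_gt0 2 r; rewrite /= in hp.
set w1 := fun m => v (2 * m)%N; set w2 := fun m => v (2 * m + 2)%N.
set W := fun x => v (2 ^ r.+2 * x + 2 ^ r.+3 - 2)%N.
set W' := fun x => v (2 ^ r.+2 * x + 2 ^ r.+2 - 2)%N.
set U := fun x => v (2 ^ r.+3 * x + 2 ^ r.+3 - 2)%N.
have hw1 : forall m, w1 m != 0 by move=> m; apply: hv.
have hw2 : forall m, w2 m != 0 by move=> m; apply: hv.
have hW : forall m, W m != 0 by move=> m; apply: hv.
have hW' : forall m, W' m != 0 by move=> m; apply: hv.
have hU : forall m, U m != 0 by move=> m; apply: hv.
rewrite claim1 // TB_r // -addSn (@RB_odd _ v w2) // (@RB_even _ v w1) //.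
rewrite /j (@IterB _ r.+1 w2 W) //; last first.
  move=> x; rewrite /W /w2; f_equal.
  rewrite !expnS; move: (2 ^ r)%N hp => p hp; nia.
rewrite (@RB_even _ W U) //; last first.
  move=> x; rewrite /W /U; f_equal.
  rewrite !expnS; move: (2 ^ r)%N hp => p hp; nia.
rewrite (@IterA _ r.+1 w1 W') //; last first.
  move=> x; rewrite /W' /w1; f_equal.
  rewrite !expnS; move: (2 ^ r)%N hp => p hp; nia.
rewrite (@RA_even _ W' U) //; last first.
  move=> x; rewrite /W' /U; f_equal.
  rewrite !expnS; move: (2 ^ r)%N hp => p hp; nia.
have sg : (-1) ^+ ((n + n).+1 * (2 ^ r.+1).-1) = -1 :> R.
  rewrite -signr_odd oddM /= (_ : (2 ^ r.+1).-1 = (2 ^ r - 1).*2.+1)%N.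
    by rewrite /= odd_double /= addnn odd_double /= expr1.
  by rewrite expnS -muln2; move: (2 ^ r)%N hp => p hp; lia.
rewrite sg /w1 /W' /= !muln0 !add0n !muln1.
rewrite (_ : (2 * (2 ^ r.+1 - 1) = 2 ^ r.+2 - 2)%N); last first.
  by rewrite !expnS; move: (2 ^ r)%N hp => p hp; lia.
rewrite (_ : (2 ^ r.+2 + 2 ^ r.+2 - 2 = 2 ^ r.+3 - 2)%N); last first.
  by rewrite !expnS; move: (2 ^ r)%N hp => p hp; lia.
have a := rA_nz n hU.
rewrite -signr_odd; case: (odd n); rewrite ?expr0 ?expr1;
  field; by rewrite ?a ?hv ?oppr_eq0 ?oner_eq0.
Qed.

Lemma xvar_nz N k : (k < N)%N -> xvar N k != 0.
Proof.
move=> lt; rewrite /xvar insubT tofrac_eq0.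
apply/eqP => h; have := congr1 (mcoeff U_(Ordinal lt)) h.
by rewrite mcoeffX eqxx mcoeff0 /= => /eqP; rewrite oner_eq0.
Qed.

Definition vN N m : RatF N := if (m.+1 < N)%N then xvar N m.+1 else 1.

Lemma vN_nz N m : vN N m != 0.
Proof. by rewrite /vN; case: ifP => [/xvar_nz|] //; rewrite oner_eq0. Qed.

Lemma vN_x N k : (k.+1 < N)%N -> vN N k = xvar N k.+1.
Proof. by rewrite /vN => ->. Qed.

Lemma Dh_HB N n : (n + n <= N)%N -> Dh N n = HB (vN N) n.
Proof.
move=> le; rewrite /Dh /HB /H; congr (determinant _); apply/matrixP => i j.
rewrite !mxE /seqB /aseq addn1 /vN.
have := ltn_ord i; have := ltn_ord j => hi hj.
by case: ifP => // _; rewrite ifT //; lia.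
Qed.

Lemma Th_TB N n : (n + n + 4 <= N)%N -> Th N n = TB (vN N) n.
Proof.
move=> le; rewrite /Th /TB !Dh_HB //; lia.
Qed.

Theorem theorem5p7 :
  (forall N n : nat, (2 * (2 * n + 1) + 3 < N)%N ->
     Th N (2 * n + 1) = - Th N (2 * n)) /\
  (forall N n : nat, (2 * (4 * n) + 3 < N)%N ->
     Th N (4 * n) = (-1) ^+ n * (xvar N 3 / xvar N 1)) /\
  (forall N k n : nat, (2 <= k)%N ->
     (2 * (2 ^ k.+1 * n + 2 ^ k - 1) + 3 < N)%N ->
     Th N (2 ^ k.+1 * n + 2 ^ k - 1) =
       (-1) ^+ n * (xvar N 1 * xvar N (2 ^ k.+1 - 1) / xvar N (2 ^ k - 1) ^+ 2)).
Proof.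
split; [|split].
- move=> N n lt; rewrite !Th_TB; try lia.
  rewrite (_ : (2 * n + 1 = (n + n).+1)%N); last by lia.
  rewrite (_ : (2 * n = n + n)%N); last by lia.
  exact: claim1 (@vN_nz N).
- move=> N n lt; rewrite !Th_TB; try lia.
  rewrite (_ : (4 * n = (n + n) + (n + n))%N); last by lia.
  rewrite claim2; last exact: (@vN_nz N).
  by rewrite !vN_x //; lia.
- move=> N k n hk lt; case: k hk lt => [|[|r]] // _ lt.
  have hp := expn_gt0 2 r; rewrite /= in hp.
  rewrite !Th_TB; last first.
    by move: lt; rewrite !expnS; move: (2 ^ r)%N hp => p hp; nia.
  rewrite (_ : (2 ^ r.+3 * n + 2 ^ r.+2 - 1 =
     ((2 ^ r.+1 * (n + n).+1).-1 + (2 ^ r.+1 * (n + n).+1).-1).+1)%N); last first.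
    by rewrite !expnS; move: (2 ^ r)%N hp => p hp; nia.
  rewrite claim3; last exact: (@vN_nz N).
  rewrite vN_x; last by lia.
  rewrite (_ : (2 ^ r.+3 - 2 = (2 ^ r.+3 - 1).-1)%N); last first.
    by rewrite !expnS; move: (2 ^ r)%N hp => p hp; lia.
  rewrite (_ : (2 ^ r.+2 - 2 = (2 ^ r.+2 - 1).-1)%N); last first.
    by rewrite !expnS; move: (2 ^ r)%N hp => p hp; lia.
  rewrite !vN_x ?prednK //.
  all: move: lt; rewrite !expnS; move: (2 ^ r)%N hp => p hp; nia.
Qed.
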